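(* Let $n,t\ge1$, $q\ge 2$, $b\ge1$ and $\boldsymbol{x}=x_1\cdots x_n\in\Sigma_q^n$. Then $\mathcal{I}_{t,b}(\boldsymbol{x})$ is the disjoint union $\bigsqcup_{\alpha\in\Sigma_q}\mathcal{I}_{t,b}(\boldsymbol{x})^{\alpha}$, where \[ \mathcal{I}_{t,b}(\boldsymbol{x})^{x_1}=x_1\circ\mathcal{I}_{t,b}(x_2\cdots x_n),\qquad \mathcal{I}_{t,b}(\boldsymbol{x})^{\alpha}=\alpha\circ\Sigma_q^{b-1}\circ\mathcal{I}_{t-1,b}(\boldsymbol{x})\ \text{ for }\alpha\in\Sigma_q\setminus\{x_1\}. \]
   Context: $\Sigma_q=\{0,\ldots,q-1\}$. A $b$-burst-insertion at position $i\in[1,n+1]$ transforms $x_1\cdots x_n$ into $x_1\cdots x_{i-1}y_1\cdots y_b x_i\cdots x_n$ for arbitrary $y_1\cdots y_b\in\Sigma_q^b$. $\mathcal{I}_{t,b}(\boldsymbol{x})$ is the set of all length-$(n+tb)$ sequences obtainable from $\boldsymbol{x}$ by $t$ successive $b$-burst-insertions ($\mathcal{I}_{0,b}(\boldsymbol{x})=\{\boldsymbol{x}\}$; for the empty sequence, $\mathcal{I}_{t,b}=\Sigma_q^{tb}$). For a set $\mathcal{S}$ of sequences, $\mathcal{S}^{\boldsymbol{u}}$ is the set of sequences in $\mathcal{S}$ starting with $\boldsymbol{u}$; $\circ$ denotes concatenation, extended to sets elementwise. *)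

(* Defs.v *)
From mathcomp Require Import all_boot.
Set Implicit Arguments. Unset Strict Implicit. Unset Printing Implicit Defensive.

(* A b-burst-insertion at position i
   (1 <= i <= n+1) inserts y (|y| = b) after the first i-1 symbols; below the
   nat [i] is the number of symbols kept before the burst (i.e. i-1). *)
Definition burst_ins (T : Type) (i : nat) (y w : seq T) : seq T :=
  take i w ++ y ++ drop i w.

Fixpoint Ins (T : Type) (b t : nat) (x : seq T) : seq T -> Prop :=
  match t with
  | 0 => fun z => z = x
  | t'.+1 => fun z => exists w, Ins b t' x w /\
       exists i y, i <= size w /\ size y = b /\ z = burst_ins i y w
  end.

Definition starting_with (T : Type) (S : seq T -> Prop) (u : seq T) : seq T -> Prop :=
  fun z => S z /\ exists v, z = u ++ v.

(* Main.v *)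
Require Import Defs.
From mathcomp Require Import all_boot.
From mathcomp Require Import zify.
Set Implicit Arguments.
Unset Strict Implicit.

Section S.
Variable T : Type.
Variable b : nat.

Fixpoint P (k : nat) (x z : seq T) : Prop :=
  match x with
  | [::] => size z = k * b
  | c :: xs => exists j g r, [/\ z = g ++ c :: r, size g = j * b, j <= k & P (k - j) xs r]
  end.

Lemma Ins_size k (x z : seq T) : Ins b k x z -> size z = size x + k * b.
Proof.
elim: k z => [|k IH] z /=; first by move=> ->; rewrite mul0n addn0.
move=> [w [/IH Hw [i [y [Hi [Hy ->]]]]]].
rewrite /burst_ins !size_cat size_take size_drop Hy Hw mulSn.
case: ltnP => H; lia.
Qed.

Lemma Ins_shift k (xs r : seq T) c : Ins b k xs r -> Ins b k (c :: xs) (c :: r).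
Proof.
elim: k r => [|k IH] r /=; first by move=> ->.
move=> [w [/IH Hw [i [y [Hi [Hy ->]]]]]].
exists (c :: w); split => //; exists i.+1, y; split => //.
Qed.

Lemma Ins_prepend j m (x z g : seq T) : Ins b m x z -> size g = j * b -> Ins b (j + m) x (g ++ z).
Proof.
elim: j g => [|j IH] g Hz Hg.
  by case: g Hg => // _; rewrite add0n.
have Hb : b <= size g by rewrite Hg mulSn leq_addr.
have Hg2 : size (drop b g) = j * b by rewrite size_drop Hg mulSn; lia.
rewrite addSn /=; exists (drop b g ++ z); split; first exact: IH.
exists 0, (take b g); split => //; split; first by rewrite size_take_min; lia.
by rewrite /burst_ins take0 drop0 /= catA cat_take_drop.
Qed.

Lemma P_Ins k (x z : seq T) : P k x z -> Ins b k x z.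
Proof.
elim: x k z => [|c xs IH] k z /=.
  move=> Hz; rewrite -(addn0 k) -(cats0 z); apply: Ins_prepend => //.
move=> [j [g [r [-> Hg Hj Hr]]]].
have -> : k = j + (k - j) by lia.
apply: Ins_prepend => //; apply: Ins_shift; exact: IH.
Qed.

Lemma P_refl (x : seq T) : P 0 x x.
Proof. elim: x => [|c xs IH] //=; exists 0, [::], xs; split => //. Qed.

Lemma P_ins k (x w : seq T) i (y : seq T) : P k x w -> i <= size w -> size y = b ->
  P k.+1 x (burst_ins i y w).
Proof.
elim: x k w i => [|c xs IH] k w i /=.
  move=> Hw Hi Hy; rewrite /burst_ins !size_cat size_take size_drop Hy Hw mulSn.
  case: ltnP => H; lia.
move=> [j [g [r [-> Hg Hj Hr]]]] Hi Hy.
case: (leqP i (size g)) => Hig.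
  exists j.+1, (take i g ++ y ++ drop i g), r; split => //.
  - by rewrite /burst_ins take_cat drop_cat !ltn_neqAle Hig andbT;
      case: eqP => [->|_]; rewrite ?take_size ?drop_size ?subnn ?take0 ?drop0 ?cats0 /= -?catA.
  - by rewrite !size_cat size_take size_drop Hy Hg mulSn; case: ltnP => H; lia.
have [i' Ei] : exists i', i = size g + i'.+1 by exists (i - size g).-1; lia.
rewrite size_cat /= Ei in Hi.
exists j, g, (burst_ins i' y r); split => //; first last.
- have -> : k.+1 - j = (k - j).+1 by lia.
  apply: IH => //; lia.
- lia.
- by rewrite /burst_ins Ei take_cat drop_cat ltnNge leq_addr /= addKn /= -catA.
Qed.

Lemma Ins_P k (x z : seq T) : Ins b k x z -> P k x z.
Proof.
elim: k z => [|k IH] z /=; first by move=> ->; exact: P_refl.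
move=> [w [/IH Hw [i [y [Hi [Hy ->]]]]]]; exact: P_ins.
Qed.

Lemma P_prepend k j (xs r h : seq T) : P k xs r -> size h = j * b -> P (k + j) xs (h ++ r).
Proof.
case: xs => [|c xs] /=.
  by move=> Hr Hh; rewrite size_cat Hr Hh mulnDl addnC.
move=> [j0 [g [r' [-> Hg Hj Hr]]]] Hh.
exists (j + j0), (h ++ g), r'; split.
- by rewrite catA.
- by rewrite size_cat Hh Hg mulnDl.
- lia.
- by have -> : k + j - (j + j0) = k - j0 by lia.
Qed.
End S.

Theorem claim1 (q n t b : nat) (x : seq 'I_q) :
  1 <= n -> 1 <= t -> 2 <= q -> 1 <= b -> size x = n ->
  (* disjoint union over alpha of the pieces I(x)^alpha *)
  (forall z, Ins b t x z <-> exists a : 'I_q, starting_with (Ins b t x) [:: a] z) /\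
  (forall (a a' : 'I_q) z, starting_with (Ins b t x) [:: a] z ->
       starting_with (Ins b t x) [:: a'] z -> a = a') /\
  (* the piece for alpha = x_1 *)
  (forall (x1 : 'I_q) xs, x = x1 :: xs ->
     forall z, starting_with (Ins b t x) [:: x1] z <->
               exists w, Ins b t xs w /\ z = x1 :: w) /\
  (* the pieces for alpha <> x_1 *)
  (forall (x1 : 'I_q) xs, x = x1 :: xs ->
     forall (a : 'I_q), a != x1 ->
     forall z, starting_with (Ins b t x) [:: a] z <->
               exists u w, size u = b - 1 /\ Ins b (t - 1) x w /\ z = a :: u ++ w).
Proof.
move=> Hn Ht Hq Hb Hx; split; [|split; [|split]].
- move=> z; split; last by move=> [a [H _]].
  move=> H; have := Ins_size H; case: z H => [|a v] H /=; first lia.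
  by move=> _; exists a; split => //; exists v.
- by move=> a a' z [_ [v ->]] [_ [v' /= [->]]].
- move=> x1 xs Ex z; split.
    move=> [H [v Ez]]; rewrite /= in Ez; subst z x; exists v; split => //.
    apply: P_Ins; move: (Ins_P H) => /= [j [g [r [Eg Hg Hj Hr]]]].
    case: g Eg Hg => [|c g'] /=.
      case=> ->; move=> /esym/eqP; rewrite muln_eq0 => /orP[/eqP Ej|/eqP Eb]; [by rewrite Ej subn0 in Hr|lia].
    case=> Ec Ev Hg; subst.
    have -> : t = (t - j) + j by lia.
    rewrite -cat_rcons; apply: P_prepend => //; rewrite size_rcons Hg; case: j Hg Hj Hr => [|j] Hg; rewrite ?mul0n // mulSn; lia.
  move=> [w [H ->]]; split; last by exists w.
  by subst x; apply: Ins_shift.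
- move=> x1 xs Ex a Ha z; split.
    move=> [H [v Ez]]; rewrite /= in Ez; subst z.
    move: (Ins_P H); rewrite Ex /= => [[j [g [r [Eg Hg Hj Hr]]]]].
    case: g Eg Hg => [|c g'] /=.
      by case=> Ea; rewrite Ea eqxx in Ha.
    case=> Ec Ev Hg; subst a v.
    have Hj1 : 0 < j by case: j Hg {Hj Hr} => //; rewrite mul0n.
    exists (take (b - 1) g'), (drop (b - 1) g' ++ x1 :: r); split; last split.
    + rewrite size_take_min; move: Hj1 Hg; case: j {Hj Hr} => // j' _; rewrite mulSn; lia.
    + apply: P_Ins; rewrite ?Ex /=; exists j.-1, (drop (b - 1) g'), r; split => //.
      * rewrite size_drop; move: Hj1 Hg; case: j {Hj Hr} => // j' _ /= Hg; rewrite mulSn in Hg; lia.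
      * lia.
      * by have -> : t - 1 - j.-1 = t - j by lia.
    + by rewrite catA cat_take_drop.
  move=> [u [w [Hu [Hw ->]]]]; split; last by exists (u ++ w).
  have -> : t = (t - 1).+1 by lia.
  exists w; split => //; exists 0, (a :: u); split => //; split; first by rewrite /= Hu; lia.
  by rewrite /burst_ins take0 drop0.
Qed.
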